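(* Let $f,g:\mathbb N\to\mathbb C$ and $\beta\in\mathbb C$ satisfy: for every even $n\in\mathbb N$, $g(n+2)f(n+2)-g(n)f(n)\mathbf 1_{\{n\ge2\}}=\beta$. Assume $|f(2n)|>0$ for all $n\ge1$ and that the limit $M_f=\lim_{n\to\infty}n/|f(2n)|\in[0,\infty]$ exists. Then for all $l,m,n\in\mathbb N$ and all $\alpha\in\mathbb C$ with $|\alpha|<M_f$, $\Omega\in\mathrm D\big((g_{N+2}L^2)^l N^m (f_NL^{*2})^n e^{\alpha f_NL^{*2}}\big)$, and $\xi_{\alpha,f}=e^{\alpha f_NL^{*2}}\Omega$ satisfies $g_{N+2}L^2\,\xi_{\alpha,f}=\alpha\beta\,\xi_{\alpha,f}$.
   Context: $\ell^2=\ell^2(\mathbb N)$, $\mathbb N=\{0,1,\dots\}$, basis $(\xi_n)$, $\Omega=\xi_0$; $N\xi_n=n\xi_n$ (maximal domain). $f_NL^{*2}$ is the operator $\xi_n\mapsto f(n+2)\xi_{n+2}$ (closure from finite combinations, maximal domain); $g_{N+2}L^2$ is the operator $\xi_n\mapsto g(n)\xi_{n-2}$ for $n\ge2$ and $\xi_0,\xi_1\mapsto0$ (maximal domain). Exponentials are defined by power series: $e^{A}\varphi=\sum_k A^k\varphi/k!$ on the set of $\varphi\in\bigcap_k\mathrm D(A^k)$ for which the series converges; compositions have their natural domains. *)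

(* Defs.v *)
From Stdlib Require Import Reals Arith.
From Coquelicot Require Import Coquelicot.
Open Scope R_scope.

(* Vectors of l^2(N) are represented by their coefficient sequences
   phi : nat -> C w.r.t. the basis (xi_n). *)
Definition vec := nat -> C.

Definition l2 (phi : vec) : Prop := ex_series (fun n => (Cmod (phi n))^2).

Definition Omega : vec := fun k => if Nat.eqb k 0 then RtoC 1 else RtoC 0.

Definition l2_lim (s : nat -> vec) (psi : vec) : Prop :=
  l2 psi /\ (forall K, l2 (s K)) /\
  is_lim_seq (fun K => Series (fun n => (Cmod (s K n - psi n)%C)^2)) 0.

(* (Possibly unbounded) operators on l^2(N), given by their graphs:
   op phi psi  means  phi is in the domain and op phi = psi. *)
Definition op := vec -> vec -> Prop.

Definition Iop : op := fun phi psi => l2 phi /\ psi = phi.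

Definition opcomp (X Y : op) : op := fun phi chi => exists psi, Y phi psi /\ X psi chi.

Fixpoint opow (X : op) (k : nat) : op :=
  match k with O => Iop | S k' => opcomp X (opow X k') end.

Definition in_dom (X : op) (phi : vec) : Prop := exists psi, X phi psi.

Definition Nop : op := fun phi psi =>
  l2 phi /\ l2 psi /\ forall k, psi k = (RtoC (INR k) * phi k)%C.

(* f_N L^{*2} : xi_n |-> f(n+2) xi_{n+2}, maximal domain
   (which is the closure of its restriction to finite combinations). *)
Definition Aop (f : nat -> C) : op := fun phi psi =>
  l2 phi /\ l2 psi /\
  forall k, psi k = (if (k <? 2)%nat then RtoC 0 else (f k * phi (k - 2)%nat)%C).

(* g_{N+2} L^2 : xi_n |-> g(n) xi_{n-2} (n >= 2), xi_0, xi_1 |-> 0, maximal domain *)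
Definition Bop (g : nat -> C) : op := fun phi psi =>
  l2 phi /\ l2 psi /\ forall k, psi k = (g (k + 2)%nat * phi (k + 2)%nat)%C.

Definition scal_vec (c : C) (phi : vec) : vec := fun k => (c * phi k)%C.

Fixpoint cpow (z : C) (k : nat) : C :=
  match k with O => RtoC 1 | S k' => (z * cpow z k')%C end.

Fixpoint psum (c : nat -> C) (u : nat -> vec) (K : nat) : vec :=
  match K with
  | O => fun _ => RtoC 0
  | S K' => fun n => (psum c u K' n + c K' * u K' n)%C
  end.

(* e^{alpha A} phi = sum_k (alpha A)^k phi / k!, defined on those phi in
   the intersection of all D(A^k) for which the series converges in l^2.
   u k is A^k phi. *)
Definition expop (alpha : C) (A : op) : op := fun phi psi =>
  exists u : nat -> vec,
    u O = phi /\ (forall k, A (u k) (u (S k))) /\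
    l2_lim (psum (fun k => (cpow alpha k / RtoC (INR (fact k)))%C) u) psi.

(* Main.v *)
Require Import Defs.
From Stdlib Require Import Reals Arith Lia Lra FunctionalExtensionality.
From Coquelicot Require Import Coquelicot.
Open Scope R_scope.
Ltac neq := repeat split; (apply Rgt_not_eq; lra).


Lemma RtoC_neq0 (x : R) : x <> 0 -> RtoC x <> RtoC 0.
Proof. intros H E. apply H. apply RtoC_inj. exact E. Qed.

Definition ev (d : nat -> C) : vec := fun n => if Nat.even n then d (Nat.div2 n) else RtoC 0.

Lemma ev_even d k : ev d (2*k)%nat = d k.
Proof. unfold ev. rewrite Nat.even_mul. simpl orb. cbv iota. f_equal. apply Nat.div2_double. Qed.

Lemma ev_odd d k : ev d (2*k+1)%nat = RtoC 0.
Proof. unfold ev. rewrite Nat.even_add, Nat.even_mul. reflexivity. Qed.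

Lemma even_or_odd (n : nat) : exists k, n = (2*k)%nat \/ n = (2*k+1)%nat.
Proof. destruct (Nat.Even_or_Odd n) as [[k H]|[k H]]; exists k; lia. Qed.

Fixpoint Pc (f : nat -> C) (k : nat) : C :=
  match k with O => RtoC 1 | S j => (Pc f j * f (2*j+2)%nat)%C end.

Definition Q (f : nat -> C) (k : nat) : R := Cmod (Pc f k) / INR (fact k).
Definition W (f : nat -> C) (r : R) (k : nat) : R := r^k * Q f k.

Lemma Q_nonneg f k : 0 <= Q f k.
Proof. unfold Q. apply Rdiv_le_0_compat. apply Cmod_ge_0. apply INR_fact_lt_0. Qed.

Lemma W_nonneg f r k : 0 <= r -> 0 <= W f r k.
Proof. intros. unfold W. apply Rmult_le_pos. apply pow_le; auto. apply Q_nonneg. Qed.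

Lemma W_0 f r : W f r 0 = 1.
Proof. unfold W, Q. simpl. rewrite Cmod_1. simpl. lra. Qed.

Lemma Q_succ f k : Q f (S k) = Q f k * Cmod (f (2*k+2)%nat) / INR (S k).
Proof.
  unfold Q. change (Pc f (S k)) with (Pc f k * f (2*k+2)%nat)%C. rewrite Cmod_mult, fact_simpl, mult_INR.
  field. split. apply INR_fact_neq_0. apply not_0_INR. lia.
Qed.

Lemma Bern (a h : R) (k : nat) : 0 < a -> 0 <= h -> a^k * (1 + INR k * h) <= (a*(1+h))^k.
Proof.
  intros Ha Hh. induction k.
  - simpl. lra.
  - rewrite S_INR. simpl.
    assert (0 <= a^k) by (apply pow_le; lra).
    assert (0 <= INR k) by apply pos_INR.
    assert (0 <= a^k * (INR k * (h*h))) by (apply Rmult_le_pos; auto; apply Rmult_le_pos; nra).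
    assert (E: (1+h)*(a^k*(1+INR k*h)) - a^k*(1+(INR k+1)*h) = a^k*(INR k*(h*h))) by ring.
    assert (a ^ k * (1 + (INR k + 1) * h) <= (1+h) * (a^k * (1 + INR k * h))) by lra.
    assert ((1+h) * (a^k * (1 + INR k * h)) <= (1+h) * (a*(1+h))^k) by (apply Rmult_le_compat_l; lra).
    replace (a * a ^ k * (1 + (INR k + 1) * h)) with (a * (a ^ k * (1 + (INR k + 1) * h))) by ring.
    replace (a * (1 + h) * (a * (1 + h)) ^ k) with (a * ((1+h) * (a*(1+h))^k)) by ring.
    apply Rmult_le_compat_l; lra.
Qed.

Lemma poly_bound (a b : R) : 0 < a < b -> exists K, 0 <= K /\ forall k, INR k * a^k <= K * b^k.
Proof.
  intros [Ha Hab]. exists (a/(b-a)). split.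
  - apply Rlt_le, Rdiv_lt_0_compat; lra.
  - intros k. set (h := (b-a)/a).
    assert (Hh : 0 <= h) by (unfold h; apply Rlt_le, Rdiv_lt_0_compat; lra).
    pose proof (Bern a h k Ha Hh) as HB.
    replace (a*(1+h)) with b in HB by (unfold h; field; lra).
    assert (0 <= a^k) by (apply pow_le; lra).
    assert (INR k * a^k * h <= b^k) by nra.
    replace (a/(b-a)) with (/h) by (unfold h; field; lra).
    assert (0 < h) by (unfold h; apply Rdiv_lt_0_compat; lra).
    apply Rmult_le_reg_r with h; auto.
    replace (/h * b^k * h) with (b^k) by (field; lra). lra.
Qed.

Lemma init_seg (N : nat) : forall (a : nat -> R) q, 0 < q -> (forall k, 0 <= a k) ->
  (forall k, (N <= k)%nat -> a (S k) <= q * a k) -> exists K, 0 <= K /\ forall k, a k <= K * q^k.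
Proof.
  induction N; intros a q Hq Ha Hs.
  - exists (a 0%nat). split; auto. induction k.
    + simpl. lra.
    + simpl. specialize (Hs k ltac:(lia)). nra.
  - destruct (IHN (fun k => a (S k)) q Hq (fun k => Ha (S k))) as [K' [HK' HK]].
    { intros k Hk. apply Hs. lia. }
    exists (Rmax (a 0%nat) (K'/q)). split.
    + apply Rle_trans with (a 0%nat); auto. apply Rmax_l.
    + intros [|k].
      * simpl. rewrite Rmult_1_r. apply Rmax_l.
      * apply Rle_trans with (K' * q^k); auto. simpl.
        apply Rle_trans with (K'/q * q * q^k).
        { right. field. lra. }
        assert (0 <= q^k) by (apply pow_le; lra).
        rewrite Rmult_assoc. apply Rmult_le_compat_r. { apply Rmult_le_pos; lra. } apply Rmax_r.
Qed.


Definition Good (f : nat -> C) (a : C) (v : vec) : Prop :=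
  (forall k, v (2*k+1)%nat = RtoC 0) /\
  forall r, Cmod a < r -> exists C0, forall k, Cmod (v (2*k)%nat) <= C0 * W f r k.

Definition Afun (f : nat -> C) (phi : vec) : vec := fun k =>
  if (k <? 2)%nat then RtoC 0 else (f k * phi (k - 2)%nat)%C.
Definition Nfun (phi : vec) : vec := fun k => (RtoC (INR k) * phi k)%C.
Definition Bfun (g : nat -> C) (phi : vec) : vec := fun k => (g (k + 2)%nat * phi (k + 2)%nat)%C.

Lemma Good_C_nonneg f (v : vec) r C0 : (forall k, Cmod (v (2*k)%nat) <= C0 * W f r k) -> 0 <= C0.
Proof. intros H. specialize (H 0%nat). rewrite W_0 in H. pose proof (Cmod_ge_0 (v (2*0)%nat)). lra. Qed.

Lemma Good_Omega f a : Good f a Omega.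
Proof.
  split.
  - intros k. unfold Omega. replace (2*k+1)%nat with (S (2*k)) by lia. reflexivity.
  - intros r Hr. assert (0 < r) by (pose proof (Cmod_ge_0 a); lra).
    exists 1. intros [|k].
    + rewrite W_0. unfold Omega. simpl. rewrite Cmod_1. lra.
    + unfold Omega. replace (2 * S k)%nat with (S (S (2*k))) by lia. simpl Nat.eqb. cbv iota.
      rewrite Cmod_0. rewrite Rmult_1_l. apply W_nonneg. lra.
Qed.

Lemma Good_A f a v : Good f a v -> Good f a (Afun f v).
Proof.
  intros [Hodd Hb]. split.
  - intros [|k]; unfold Afun.
    + reflexivity.
    + replace (2 * S k + 1 <? 2)%nat with false by (symmetry; apply Nat.ltb_ge; lia).
      replace (2 * S k + 1 - 2)%nat with (2*k+1)%nat by lia. rewrite Hodd. apply Cmult_0_r.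
  - intros r Hr. pose proof (Cmod_ge_0 a).
    set (r' := (Cmod a + r)/2).
    destruct (Hb r' ltac:(unfold r'; lra)) as [C0 HC].
    pose proof (Good_C_nonneg _ _ _ _ HC) as HC0.
    destruct (poly_bound r' r ltac:(unfold r'; lra)) as [K [HK0 HK]].
    assert (Hr' : 0 < r') by (unfold r'; lra).
    exists (C0 * K / r'). intros [|k].
    + unfold Afun. simpl. rewrite Cmod_0. apply Rmult_le_pos. 
      apply Rdiv_le_0_compat; [apply Rmult_le_pos|]; lra. apply W_nonneg. lra.
    + unfold Afun.
      replace (2 * S k <? 2)%nat with false by (symmetry; apply Nat.ltb_ge; lia).
      replace (2 * S k - 2)%nat with (2*k)%nat by lia.
      replace (2 * S k)%nat with (2*k+2)%nat by lia.
      rewrite Cmod_mult.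
      specialize (HC k). specialize (HK (S k)).
      pose proof (Cmod_ge_0 (f (2*k+2)%nat)) as Hf.
      apply Rle_trans with (Cmod (f (2 * k + 2)%nat) * (C0 * W f r' k)).
      { apply Rmult_le_compat_l; auto. }
      unfold W in *. rewrite Q_succ.
      pose proof (Q_nonneg f k).
      assert (HS : 0 < INR (S k)) by (apply lt_0_INR; lia).
      replace (Cmod (f (2 * k + 2)%nat) * (C0 * (r' ^ k * Q f k)))
        with (C0 / r' * (INR (S k) * r' ^ (S k)) * (Q f k * Cmod (f (2 * k + 2)%nat) / INR (S k)))
        by (change (r' ^ S k) with (r' * r' ^ k); field; neq).
      replace (C0 * K / r' * (r ^ S k * (Q f k * Cmod (f (2 * k + 2)%nat) / INR (S k))))
        with (C0 / r' * (K * r ^ S k) * (Q f k * Cmod (f (2 * k + 2)%nat) / INR (S k)))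
        by (field; neq).
      apply Rmult_le_compat_r.
      { apply Rdiv_le_0_compat; [apply Rmult_le_pos|]; lra. }
      apply Rmult_le_compat_l; auto. apply Rdiv_le_0_compat; lra.
Qed.

Lemma Good_N f a v : Good f a v -> Good f a (Nfun v).
Proof.
  intros [Hodd Hb]. split.
  - intros k; unfold Nfun. rewrite Hodd. apply Cmult_0_r.
  - intros r Hr. pose proof (Cmod_ge_0 a).
    set (r' := (Cmod a + r)/2).
    destruct (Hb r' ltac:(unfold r'; lra)) as [C0 HC].
    pose proof (Good_C_nonneg _ _ _ _ HC) as HC0.
    destruct (poly_bound r' r ltac:(unfold r'; lra)) as [K [HK0 HK]].
    exists (2 * C0 * K). intros k. unfold Nfun.
    rewrite Cmod_mult, Cmod_R, Rabs_pos_eq by apply pos_INR.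
    specialize (HC k). specialize (HK k). rewrite mult_INR.
    pose proof (pos_INR k).
    apply Rle_trans with (2 * INR k * (C0 * W f r' k)).
    { apply Rmult_le_compat_l; auto. simpl. lra. }
    unfold W. pose proof (Q_nonneg f k).
    replace (2 * INR k * (C0 * (r' ^ k * Q f k))) with (2 * C0 * Q f k * (INR k * r' ^ k)) by ring.
    replace (2 * C0 * K * (r ^ k * Q f k)) with (2 * C0 * Q f k * (K * r ^ k)) by ring.
    apply Rmult_le_compat_l; auto. apply Rmult_le_pos; [|auto]. lra.
Qed.

Lemma gf_id (f g : nat -> C) (beta : C)
  (hfg : forall n : nat, Nat.even n = true ->
     (g (n + 2)%nat * f (n + 2)%nat
      - (if (2 <=? n)%nat then (g n * f n)%C else RtoC 0))%C = beta) :
  forall k, (g (2*k+2)%nat * f (2*k+2)%nat)%C = (RtoC (INR (S k)) * beta)%C.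
Proof.
  induction k.
  - specialize (hfg 0%nat eq_refl). simpl in *. rewrite <- hfg. ring.
  - assert (He : Nat.even (2*k+2) = true).
    { rewrite Nat.even_add, Nat.even_mul. reflexivity. }
    specialize (hfg _ He).
    replace (2 <=? 2*k+2)%nat with true in hfg by (symmetry; apply Nat.leb_le; lia).
    replace (2 * k + 2 + 2)%nat with (2 * S k + 2)%nat in hfg by lia.
    rewrite IHk in hfg.
    replace (g (2 * S k + 2)%nat * f (2 * S k + 2)%nat)%C with (beta + RtoC (INR (S k)) * beta)%C
      by (rewrite <- hfg at 1; ring).
    rewrite (S_INR (S k)), RtoC_plus. ring.
Qed.

Lemma Good_B f g beta a v :
  (forall k, (g (2*k+2)%nat * f (2*k+2)%nat)%C = (RtoC (INR (S k)) * beta)%C) ->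
  Good f a v -> Good f a (Bfun g v).
Proof.
  intros Hgf [Hodd Hb]. split.
  - intros k; unfold Bfun. replace (2*k+1+2)%nat with (2*(S k)+1)%nat by lia.
    rewrite Hodd. apply Cmult_0_r.
  - intros r Hr. pose proof (Cmod_ge_0 a).
    destruct (Hb r Hr) as [C0 HC].
    pose proof (Good_C_nonneg _ _ _ _ HC) as HC0.
    exists (C0 * r * Cmod beta). intros k. unfold Bfun.
    replace (2*k+2)%nat with (2 * S k)%nat by lia.
    rewrite Cmod_mult. specialize (HC (S k)).
    apply Rle_trans with (Cmod (g (2 * S k)%nat) * (C0 * W f r (S k))).
    { apply Rmult_le_compat_l; auto. apply Cmod_ge_0. }
    unfold W. rewrite Q_succ.
    assert (HS : 0 < INR (S k)) by (apply lt_0_INR; lia).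
    assert (E : Cmod (g (2 * S k)%nat) * Cmod (f (2*k+2)%nat) = INR (S k) * Cmod beta).
    { rewrite <- Cmod_mult. replace (2 * S k)%nat with (2*k+2)%nat by lia.
      rewrite Hgf, Cmod_mult, Cmod_R, Rabs_pos_eq by apply pos_INR. reflexivity. }
    right.
    replace (Cmod (g (2 * S k)%nat) * (C0 * (r ^ S k * (Q f k * Cmod (f (2 * k + 2)%nat) / INR (S k)))))
      with (C0 * r ^ S k * Q f k * (Cmod (g (2 * S k)%nat) * Cmod (f (2 * k + 2)%nat)) / INR (S k))
      by (field; neq).
    rewrite E. change (r ^ S k) with (r * r ^ k). unfold W. field. neq.
Qed.


Lemma lim_bound (u : nat -> R) (Mf : Rbar) (x : R) :
  is_lim_seq u Mf -> Rbar_lt x Mf ->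
  exists t N, x < t /\ forall n, (N <= n)%nat -> t < u n.
Proof.
  intros H Hx. apply is_lim_seq_spec in H. destruct Mf as [m| |]; simpl in *.
  - assert (Hp : 0 < (m - x)/2) by lra.
    destruct (H (mkposreal _ Hp)) as [N HN]. exists ((x+m)/2), N. split; [lra|].
    intros n Hn. specialize (HN n Hn). simpl in HN. apply Rabs_def2 in HN. lra.
  - destruct (H (x+1)) as [N HN]. exists (x+1), N. split; [lra|]. exact HN.
  - contradiction.
Qed.

Lemma Good_geom f a v (Mf : Rbar)
  (hf : forall n : nat, (1 <= n)%nat -> 0 < Cmod (f (2 * n)%nat))
  (hM : is_lim_seq (fun n : nat => INR n / Cmod (f (2 * n)%nat)) Mf)
  (ha : Rbar_lt (Cmod a) Mf) :
  Good f a v -> exists D s, 0 <= D /\ 0 < s < 1 /\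
     forall n, (Cmod (v n))^2 <= D * (s^n * s^n).
Proof.
  intros [Hodd Hb].
  destruct (lim_bound _ _ _ hM ha) as [t [N [Ht HN]]].
  pose proof (Cmod_ge_0 a).
  set (r := (Cmod a + t)/2).
  assert (Hr : 0 < r) by (unfold r; lra).
  assert (Hrt : r < t) by (unfold r; lra).
  set (q := r / t).
  assert (Hq : 0 < q < 1).
  { unfold q. split. apply Rdiv_lt_0_compat; lra. apply Rmult_lt_reg_r with t; [lra|].
    field_simplify; lra. }
  destruct (Hb r ltac:(unfold r; lra)) as [C0 HC].
  pose proof (Good_C_nonneg _ _ _ _ HC) as HC0.
  destruct (init_seg N (W f r) q ltac:(lra) (fun k => W_nonneg f r k ltac:(lra))) as [K [HK0 HK]].
  { intros k Hk. unfold W. rewrite Q_succ.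
    assert (HS : 0 < INR (S k)) by (apply lt_0_INR; lia).
    specialize (HN (S k) ltac:(lia)). specialize (hf (S k) ltac:(lia)).
    replace (2 * S k)%nat with (2*k+2)%nat in * by lia.
    set (F := Cmod (f (2*k+2)%nat)) in *.
    assert (t * F < INR (S k)).
    { apply Rmult_lt_compat_r with (r := F) in HN; auto.
      replace (INR (S k) / F * F) with (INR (S k)) in HN by (field; neq). lra. }
    pose proof (Q_nonneg f k).
    replace (r ^ S k * (Q f k * F / INR (S k))) with ((r ^ k * Q f k) * (r * F / INR (S k)))
      by (change (r ^ S k) with (r * r ^ k); field; neq).
    replace (q * (r ^ k * Q f k)) with ((r ^ k * Q f k) * q) by ring.
    apply Rmult_le_compat_l. { apply Rmult_le_pos; auto. apply pow_le; lra. }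
    unfold q. apply Rmult_le_reg_r with (INR (S k) * t). { apply Rmult_lt_0_compat; lra. }
    replace (r * F / INR (S k) * (INR (S k) * t)) with (r * (t * F)) by (field; neq).
    replace (r / t * (INR (S k) * t)) with (r * INR (S k)) by (field; neq).
    apply Rmult_le_compat_l; lra. }
  exists ((C0 * K)^2), (sqrt q). split; [apply pow2_ge_0|]. split.
  { split. apply sqrt_lt_R0; lra. rewrite <- sqrt_1. apply sqrt_lt_1; lra. }
  intros n.
  assert (Hs : sqrt q ^ n * sqrt q ^ n = q ^ n).
  { rewrite <- Rpow_mult_distr, sqrt_sqrt by lra. reflexivity. }
  rewrite Hs.
  destruct (even_or_odd n) as [k [Hn|Hn]]; subst n.
  - specialize (HC k). specialize (HK k).
    assert (Cmod (v (2*k)%nat) <= C0 * K * q ^ k).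
    { apply Rle_trans with (C0 * W f r k); auto.
      rewrite Rmult_assoc. apply Rmult_le_compat_l; auto. }
    pose proof (Cmod_ge_0 (v (2*k)%nat)).
    replace ((C0 * K) ^ 2 * q ^ (2 * k)) with ((C0 * K * q^k)^2)
      by (rewrite (Nat.mul_comm 2 k), pow_mult; ring).
    apply pow_incr. lra.
  - rewrite Hodd, Cmod_0. simpl. rewrite Rmult_0_l.
    apply Rmult_le_pos. apply pow2_ge_0. apply pow_le. lra.
Qed.

Lemma geom_l2 (v : vec) : (exists D s, 0 <= D /\ 0 < s < 1 /\
     forall n, (Cmod (v n))^2 <= D * (s^n * s^n)) -> l2 v.
Proof.
  intros [D [s [HD [Hs H]]]]. unfold l2.
  apply (@ex_series_le R_AbsRing R_CompleteNormedModule _ (fun n => D * (s*s)^n)).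
  - intros n. change (norm ((Cmod (v n))^2)) with (Rabs ((Cmod (v n))^2)).
    rewrite Rabs_pos_eq by apply pow2_ge_0. rewrite Rpow_mult_distr. apply H.
  - apply (ex_series_scal_l D (fun n => (s*s)^n)). apply ex_series_geom.
    rewrite Rabs_pos_eq by nra. nra.
Qed.

Lemma Series_nonneg (a : nat -> R) : (forall n, 0 <= a n) -> ex_series a -> 0 <= Series a.
Proof.
  intros H He. replace 0 with (Series (fun n => 0 * a n)).
  - apply Series_le; auto. intros n. rewrite Rmult_0_l. split; [lra|auto].
  - rewrite Series_scal_l. ring.
Qed.

Lemma sum_ge_term (a : nat -> R) n : (forall n, 0 <= a n) -> a n <= sum_f_R0 a n.
Proof.
  intros H. destruct n. simpl. lra. simpl.
  assert (forall m, 0 <= sum_f_R0 a m).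
  { induction m; simpl. auto. specialize (H (S m)). lra. }
  specialize (H0 n). lra.
Qed.

Lemma term_le_series (a : nat -> R) n : (forall n, 0 <= a n) -> ex_series a -> a n <= Series a.
Proof.
  intros H He. rewrite (Series_incr_n a (S n)) by (auto; lia). simpl Init.Nat.pred.
  pose proof (sum_ge_term a n H).
  assert (0 <= Series (fun k => a (S n + k)%nat)).
  { apply Series_nonneg. auto. apply (ex_series_incr_n a (S n)). auto. }
  lra.
Qed.

Lemma l2_diff (a b : vec) : l2 a -> l2 b -> ex_series (fun m => (Cmod (a m - b m)%C)^2).
Proof.
  intros Ha Hb.
  apply (@ex_series_le R_AbsRing R_CompleteNormedModule _ (fun m => 2 * (Cmod (a m))^2 + 2 * (Cmod (b m))^2)).
  - intros n. change (norm ((Cmod (a n - b n)%C)^2)) with (Rabs ((Cmod (a n - b n)%C)^2)).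
    rewrite Rabs_pos_eq by apply pow2_ge_0.
    assert (Cmod (a n - b n)%C <= Cmod (a n) + Cmod (b n)).
    { unfold Cminus. rewrite <- (Cmod_opp (b n)). apply Cmod_triangle. }
    pose proof (Cmod_ge_0 (a n - b n)%C).
    assert (Cmod (a n - b n)%C ^ 2 <= (Cmod (a n) + Cmod (b n))^2) by (apply pow_incr; lra).
    pose proof (pow2_ge_0 (Cmod (a n) - Cmod (b n))).
    nra.
  - apply (ex_series_plus (fun m => 2 * (Cmod (a m))^2) (fun m => 2 * (Cmod (b m))^2)).
    + apply (ex_series_scal_l 2 (fun m => (Cmod (a m))^2)). exact Ha.
    + apply (ex_series_scal_l 2 (fun m => (Cmod (b m))^2)). exact Hb.
Qed.


Definition cc (a : C) (k : nat) : C := (cpow a k / RtoC (INR (fact k)))%C.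
Definition Xi (f : nat -> C) (a : C) : vec := ev (fun k => (cc a k * Pc f k)%C).
Definition uu (f : nat -> C) (k : nat) : vec := Nat.iter k (Afun f) Omega.

Lemma Cmod_cpow a k : Cmod (cpow a k) = Cmod a ^ k.
Proof. induction k; simpl. apply Cmod_1. rewrite Cmod_mult, IHk. reflexivity. Qed.

Lemma Good_Xi f a : Good f a (Xi f a).
Proof.
  split.
  - intros k. unfold Xi. apply ev_odd.
  - intros r Hr. exists 1. intros k. unfold Xi. rewrite ev_even. unfold cc, Cdiv.
    rewrite !Cmod_mult, Cmod_inv by (apply RtoC_neq0; apply INR_fact_neq_0).
    rewrite Cmod_R, Rabs_pos_eq by apply pos_INR. rewrite Cmod_cpow.
    unfold W, Q. pose proof (Cmod_ge_0 a).
    replace (Cmod a ^ k * / INR (fact k) * Cmod (Pc f k)) with (Cmod a ^ k * (Cmod (Pc f k) / INR (fact k)))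
      by (unfold Rdiv; ring).
    rewrite Rmult_1_l. apply Rmult_le_compat_r.
    + apply Rdiv_le_0_compat. apply Cmod_ge_0. apply INR_fact_lt_0.
    + apply pow_incr. lra.
Qed.

Lemma uu_formula f k n : uu f k n = if (n =? 2*k)%nat then Pc f k else RtoC 0.
Proof.
  revert n. induction k; intros n.
  - unfold uu. simpl. unfold Omega. reflexivity.
  - unfold uu. change (Nat.iter (S k) (Afun f) Omega) with (Afun f (uu f k)).
    unfold Afun. destruct (Nat.ltb_spec n 2).
    + destruct (Nat.eqb_spec n (2 * S k)); [lia|reflexivity].
    + rewrite IHk. destruct (Nat.eqb_spec (n-2) (2*k)).
      * destruct (Nat.eqb_spec n (2 * S k)); [|lia].
        subst n. change (Pc f (S k)) with (Pc f k * f (2*k+2)%nat)%C.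
        replace (2 * S k)%nat with (2*k+2)%nat by lia. apply Cmult_comm.
      * destruct (Nat.eqb_spec n (2 * S k)); [lia|]. apply Cmult_0_r.
Qed.

Lemma psum_formula f a K n :
  psum (cc a) (uu f) K n = if (n <? 2*K)%nat then Xi f a n else RtoC 0.
Proof.
  revert n. induction K; intros n.
  - simpl. destruct n; reflexivity.
  - change (psum (cc a) (uu f) (S K) n) with (psum (cc a) (uu f) K n + cc a K * uu f K n)%C.
    rewrite IHK, uu_formula.
    destruct (Nat.ltb_spec n (2*K)).
    + destruct (Nat.eqb_spec n (2*K)); [lia|].
      destruct (Nat.ltb_spec n (2 * S K)); [|lia]. rewrite Cmult_0_r, Cplus_0_r. reflexivity.
    + destruct (Nat.eqb_spec n (2*K)).
      * subst n. destruct (Nat.ltb_spec (2*K) (2 * S K)); [|lia].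
        unfold Xi. rewrite ev_even. apply Cplus_0_l.
      * rewrite Cmult_0_r, Cplus_0_r. destruct (Nat.ltb_spec n (2 * S K)); [|reflexivity].
        assert (n = 2*K+1)%nat by lia. subst n. unfold Xi. rewrite ev_odd. reflexivity.
Qed.

Lemma A_func f phi psi : Aop f phi psi -> psi = Afun f phi.
Proof. intros [_ [_ H]]. apply functional_extensionality. exact H. Qed.

Lemma opow_iter (X : op) (F : vec -> vec) (P : vec -> Prop) :
  (forall v, P v -> l2 v) -> (forall v, P v -> P (F v) /\ X v (F v)) ->
  forall k v, P v -> P (Nat.iter k F v) /\ opow X k v (Nat.iter k F v).
Proof.
  intros Hl HF k. induction k; intros v Hv.
  - simpl. split; auto. split; auto.
  - destruct (IHk v Hv) as [HP Ho]. destruct (HF _ HP) as [HP' HX].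
    split. exact HP'. exists (Nat.iter k F v). split; auto.
Qed.


Lemma pow_dec (s : R) (K n : nat) : 0 <= s <= 1 -> (K <= n)%nat -> s ^ n <= s ^ K.
Proof.
  intros Hs Hn. replace n with (K + (n - K))%nat by lia. rewrite pow_add.
  assert (s ^ (n - K) <= 1). { rewrite <- (pow1 (n-K)). apply pow_incr. lra. }
  assert (0 <= s ^ K) by (apply pow_le; lra). nra.
Qed.

Lemma Xi_expop f a (Mf : Rbar)
  (hf : forall n : nat, (1 <= n)%nat -> 0 < Cmod (f (2 * n)%nat))
  (hM : is_lim_seq (fun n : nat => INR n / Cmod (f (2 * n)%nat)) Mf)
  (ha : Rbar_lt (Cmod a) Mf) : expop a (Aop f) Omega (Xi f a).
Proof.
  assert (HGl : forall v, Good f a v -> l2 v).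
  { intros v Hv. apply geom_l2. eapply Good_geom; eauto. }
  exists (uu f). split; [reflexivity|]. split.
  - intros k. assert (HG : Good f a (uu f k)).
    { induction k. apply Good_Omega. apply (Good_A f a (uu f k) IHk). }
    change (uu f (S k)) with (Afun f (uu f k)).
    split; [auto|]. split; [apply HGl, Good_A; auto|]. intros; reflexivity.
  - change (l2_lim (psum (cc a) (uu f)) (Xi f a)).
    destruct (Good_geom f a (Xi f a) Mf hf hM ha (Good_Xi f a)) as [D [s [HD [Hs HXb]]]].
    split; [apply HGl, Good_Xi|]. split.
    + intros K. apply geom_l2. exists D, s. split; auto. split; auto. intros n.
      rewrite psum_formula.
      destruct (n <? 2*K)%nat; auto. rewrite Cmod_0. simpl. rewrite Rmult_0_l.
      apply Rmult_le_pos; auto. apply Rmult_le_pos; apply pow_le; lra.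
    + set (e := fun K n => (Cmod (psum (cc a) (uu f) K n - Xi f a n)%C) ^ 2).
      assert (Hb : forall K n, 0 <= e K n <= D * s^K * s^n).
      { intros K n. unfold e. split; [apply pow2_ge_0|]. rewrite psum_formula.
        destruct (Nat.ltb_spec n (2*K)).
        - unfold Cminus. rewrite Cplus_opp_r, Cmod_0. simpl. rewrite Rmult_0_l.
          apply Rmult_le_pos; [apply Rmult_le_pos; auto|]; apply pow_le; lra.
        - unfold Cminus. rewrite Cplus_0_l, Cmod_opp.
          apply Rle_trans with (D * (s^n * s^n)); auto.
          rewrite Rmult_assoc. apply Rmult_le_compat_l; auto.
          apply Rmult_le_compat_r. apply pow_le; lra. apply pow_dec; lra || lia. }
      assert (Hgeo : forall K, ex_series (fun n => D * s^K * s^n)).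
      { intros K. apply (ex_series_scal_l (D * s^K) (fun n => s^n)). apply ex_series_geom.
        rewrite Rabs_pos_eq; lra. }
      assert (He : forall K, ex_series (e K)).
      { intros K. apply (@ex_series_le R_AbsRing R_CompleteNormedModule (e K) (fun n => D * s^K * s^n)); [|apply Hgeo].
        intros n. change (norm (e K n)) with (Rabs (e K n)). rewrite Rabs_pos_eq; apply Hb. }
      apply is_lim_seq_le_le with (u := fun _ => 0) (w := fun K => D / (1 - s) * s^K).
      * intros K. split.
        { apply Series_nonneg; [|apply He]. intros; apply Hb. }
        apply Rle_trans with (Series (fun n => D * s^K * s^n)).
        { apply Series_le; [|apply Hgeo]. intros n; apply Hb. }
        rewrite Series_scal_l, Series_geom by (rewrite Rabs_pos_eq; lra).
        right. field. lra.
      * apply is_lim_seq_const.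
      * replace (Finite 0) with (Rbar_mult (D / (1 - s)) 0) by (simpl; f_equal; ring).
        apply is_lim_seq_scal_l. apply is_lim_seq_geom. rewrite Rabs_pos_eq; lra.
Qed.

Lemma expop_unique f a xi : expop a (Aop f) Omega xi -> xi = Xi f a.
Proof.
  intros [u [Hu0 [HuS Hlim]]].
  assert (Hu : u = uu f).
  { apply functional_extensionality. intros k. induction k.
    - exact Hu0.
    - rewrite (A_func _ _ _ (HuS k)), IHk. reflexivity. }
  subst u. destruct Hlim as [Hxi [HsK Hlim]].
  apply functional_extensionality. intros n.
  set (x := (Cmod (Xi f a n - xi n)%C) ^ 2).
  assert (Hx : Rbar_le x 0).
  { apply (is_lim_seq_le_loc (fun _ => x) (fun K => Series (fun m => (Cmod (psum (cc a) (uu f) K m - xi m)%C) ^ 2)) x 0); [|apply is_lim_seq_const|exact Hlim].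
    exists (S n). intros K HK.
    set (e := fun m => (Cmod (psum (cc a) (uu f) K m - xi m)%C) ^ 2).
    assert (e n = x).
    { unfold e, x. rewrite psum_formula. destruct (Nat.ltb_spec n (2*K)); [reflexivity|lia]. }
    rewrite <- H. apply term_le_series. intros; apply pow2_ge_0. apply l2_diff; [exact (HsK K)|exact Hxi]. }
  simpl in Hx. unfold x in Hx.
  pose proof (Cmod_ge_0 (Xi f a n - xi n)%C).
  assert (Cmod (Xi f a n - xi n)%C = 0) by nra.
  apply Cmod_eq_0 in H0. symmetry. apply Ceq_minus. exact H0.
Qed.

Lemma B_coeff f g beta a
  (Hgf : forall k, (g (2*k+2)%nat * f (2*k+2)%nat)%C = (RtoC (INR (S k)) * beta)%C) :
  Bfun g (Xi f a) = scal_vec (a * beta)%C (Xi f a).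
Proof.
  apply functional_extensionality. intros k. unfold Bfun, scal_vec, Xi.
  destruct (even_or_odd k) as [j [Hk|Hk]]; subst k.
  - replace (2*j+2)%nat with (2 * S j)%nat by lia. rewrite !ev_even.
    change (Pc f (S j)) with (Pc f j * f (2*j+2)%nat)%C.
    replace (2 * S j)%nat with (2*j+2)%nat by lia.
    transitivity ((g (2*j+2)%nat * f (2*j+2)%nat) * (cc a (S j) * Pc f j))%C; [ring|].
    rewrite Hgf. unfold cc. change (cpow a (S j)) with (a * cpow a j)%C.
    rewrite fact_simpl, mult_INR, RtoC_mult.
    field. split; apply RtoC_neq0. apply INR_fact_neq_0. apply not_0_INR. lia.
  - replace (2*j+1+2)%nat with (2 * S j + 1)%nat by lia. rewrite !ev_odd.
    rewrite !Cmult_0_r. reflexivity.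
Qed.


Theorem mainTheorem6 (f g : nat -> C) (beta : C)
  (hfg : forall n : nat, Nat.even n = true ->
     (g (n + 2)%nat * f (n + 2)%nat
      - (if (2 <=? n)%nat then (g n * f n)%C else RtoC 0))%C = beta)
  (hf : forall n : nat, (1 <= n)%nat -> 0 < Cmod (f (2 * n)%nat))
  (Mf : Rbar)
  (hM : is_lim_seq (fun n : nat => INR n / Cmod (f (2 * n)%nat)) Mf) :
  forall (l m n : nat) (alpha : C), Rbar_lt (Cmod alpha) Mf ->
    in_dom (opcomp (opow (Bop g) l)
             (opcomp (opow Nop m)
               (opcomp (opow (Aop f) n) (expop alpha (Aop f))))) Omega /\
    (forall xi : vec, expop alpha (Aop f) Omega xi ->
       Bop g xi (scal_vec (alpha * beta)%C xi)).
Proof.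
  intros l m n alpha Ha.
  pose proof (gf_id f g beta hfg) as Hgf.
  assert (HGl : forall v, Good f alpha v -> l2 v).
  { intros v Hv. apply geom_l2. eapply Good_geom; eauto. }
  assert (HA : forall v, Good f alpha v -> Good f alpha (Afun f v) /\ Aop f v (Afun f v)).
  { intros v Hv. pose proof (Good_A _ _ _ Hv). split; [assumption|]. split; [apply HGl; auto|]. split; [apply HGl; auto|]. intros; reflexivity. }
  assert (HN : forall v, Good f alpha v -> Good f alpha (Nfun v) /\ Nop v (Nfun v)).
  { intros v Hv. pose proof (Good_N _ _ _ Hv). split; [assumption|]. split; [apply HGl; auto|]. split; [apply HGl; auto|]. intros; reflexivity. }
  assert (HB : forall v, Good f alpha v -> Good f alpha (Bfun g v) /\ Bop g v (Bfun g v)).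
  { intros v Hv. pose proof (Good_B f g beta _ _ Hgf Hv). split; [assumption|]. split; [apply HGl; auto|]. split; [apply HGl; auto|]. intros; reflexivity. }
  split.
  - destruct (opow_iter _ _ _ HGl HA n (Xi f alpha) (Good_Xi f alpha)) as [G2 O2].
    destruct (opow_iter _ _ _ HGl HN m _ G2) as [G3 O3].
    destruct (opow_iter _ _ _ HGl HB l _ G3) as [G4 O4].
    eexists. eexists. split; [|exact O4].
    eexists. split; [|exact O3].
    eexists. split; [|exact O2].
    eapply Xi_expop; eauto.
  - intros xi Hxi. rewrite (expop_unique _ _ _ Hxi).
    rewrite <- (B_coeff f g beta alpha Hgf). apply HB, Good_Xi.
Qed.
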